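(* If there is a language $L \subseteq \mathbb{N}$ capturing a functional property $\psi \subseteq \mathbb{N}$, then $\psi \in \Sigma^0_3$.
   Context: Programs (generators) are identified with natural numbers in a fixed universal programming language; $\varphi_g$ is the partial computable function computed by $g$. A property $\psi \subseteq \mathbb{N}$ is functional if whenever $\varphi_g = \varphi_{g'}$, $\psi(g) \leftrightarrow \psi(g')$. A language $L \subseteq \mathbb{N}$ captures $\psi$ if $L$ is decidable, every $g \in L$ satisfies $\psi$, and for every $g' \in \mathbb{N}$ satisfying $\psi$ there is $g \in L$ with $\varphi_g = \varphi_{g'}$. $\Sigma^0_3$ is the corresponding class of the arithmetical hierarchy. *)

(* Defs.v *)
From HB Require Import structures.
From mathcomp Require Import all_boot.
Set Implicit Arguments. Unset Strict Implicit. Unset Printing Implicit Defensive.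

(* Cantor pairing: enumeration (0,0),(1,0),(0,1),(2,0),(1,1),(0,2),... *)
Definition cpair (a b : nat) : nat := ((a + b) * (a + b).+1)./2 + b.
Fixpoint cunpair (n : nat) : nat * nat :=
  match n with
  | 0 => (0, 0)
  | n'.+1 => let: (a, b) := cunpair n' in
             match a with 0 => (b.+1, 0) | a'.+1 => (a', b.+1) end
  end.

Inductive code : Type :=
  | CZero
  | CSucc
  | CFst
  | CSnd
  | CPair of code & code
  | CComp of code & code   (* x |-> f (g x) *)
  | CRec of code & code    (* h <a,0> = f a ; h <a,n+1> = g <<a,n>, h <a,n>> *)
  | CMu of code.           (* x |-> least m with f <x,m> = 0, f <x,i> defined for i<m *)

Fixpoint code_to_tree (c : code) : GenTree.tree unit :=
  match c with
  | CZero => GenTree.Node 0 [::]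
  | CSucc => GenTree.Node 1 [::]
  | CFst => GenTree.Node 2 [::]
  | CSnd => GenTree.Node 3 [::]
  | CPair f g => GenTree.Node 4 [:: code_to_tree f; code_to_tree g]
  | CComp f g => GenTree.Node 5 [:: code_to_tree f; code_to_tree g]
  | CRec f g => GenTree.Node 6 [:: code_to_tree f; code_to_tree g]
  | CMu f => GenTree.Node 7 [:: code_to_tree f]
  end.

Fixpoint tree_to_code (t : GenTree.tree unit) : option code :=
  match t with
  | GenTree.Node 0 [::] => Some CZero
  | GenTree.Node 1 [::] => Some CSucc
  | GenTree.Node 2 [::] => Some CFst
  | GenTree.Node 3 [::] => Some CSnd
  | GenTree.Node 4 [:: f; g] =>
      obind (fun f' => omap (CPair f') (tree_to_code g)) (tree_to_code f)
  | GenTree.Node 5 [:: f; g] =>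
      obind (fun f' => omap (CComp f') (tree_to_code g)) (tree_to_code f)
  | GenTree.Node 6 [:: f; g] =>
      obind (fun f' => omap (CRec f') (tree_to_code g)) (tree_to_code f)
  | GenTree.Node 7 [:: f] => omap CMu (tree_to_code f)
  | _ => None
  end.

Lemma code_treeK : pcancel code_to_tree tree_to_code.
Proof. by elim=> //= [f -> g ->|f -> g ->|f -> g ->|f ->]. Qed.

HB.instance Definition _ := Countable.copy code (pcan_type code_treeK).

(* Programs (generators) are natural numbers: g denotes the program
   decoded from g (non-codes denote the constant-zero program). *)
Definition decode (g : nat) : code := odflt CZero (unpickle g).

Fixpoint eval (k : nat) (c : code) (x : nat) {struct k} : option nat :=
  match k with
  | 0 => None
  | k'.+1 =>
    match c with
    | CZero => Some 0
    | CSucc => Some x.+1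
    | CFst => Some (cunpair x).1
    | CSnd => Some (cunpair x).2
    | CPair f g =>
        obind (fun a => omap (cpair a) (eval k' g x)) (eval k' f x)
    | CComp f g => obind (eval k' f) (eval k' g x)
    | CRec f g =>
        let: (a, n) := cunpair x in
        (fix r (n : nat) : option nat :=
           match n with
           | 0 => eval k' f a
           | n'.+1 => obind (fun v => eval k' g (cpair (cpair a n') v)) (r n')
           end) n
    | CMu f =>
        (fix search (i m : nat) : option nat :=
           match i with
           | 0 => None
           | i'.+1 =>
             match eval k' f (cpair x m) with
             | Some 0 => Some m
             | Some _ => search i' m.+1
             | None => None
             end
           end) k' 0
    end
  end.

Definition phi (g x y : nat) : Prop := exists k, eval k (decode g) x = Some y.

Definition same_fun (g g' : nat) : Prop := forall x y, phi g x y <-> phi g' x y.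

Definition decidable_set (A : nat -> Prop) : Prop :=
  exists e, forall n, (A n -> phi e n 1) /\ (~ A n -> phi e n 0).

Definition functional (psi : nat -> Prop) : Prop :=
  forall g g', same_fun g g' -> (psi g <-> psi g').

Definition captures (L psi : nat -> Prop) : Prop :=
  [/\ decidable_set L,
      (forall g, L g -> psi g) &
      (forall g', psi g' -> exists2 g, L g & same_fun g g')].

Definition Sigma03 (psi : nat -> Prop) : Prop :=
  exists R : nat -> Prop, decidable_set R /\
    forall g, psi g <->
      exists a, forall b, exists c, R (cpair g (cpair a (cpair b c))).

(* Main.v *)
Require Import Defs.
From mathcomp Require Import all_boot.
From Stdlib Require Import Lia Classical ClassicalEpsilon.
From mathcomp Require Import zify.
Set Implicit Arguments. Unset Strict Implicit. Unset Printing Implicit Defensive.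

Definition nxt (p : nat * nat) := let: (a, b) := p in
  match a with 0 => (b.+1, 0) | a'.+1 => (a', b.+1) end.

Lemma cunpairS n : cunpair n.+1 = nxt (cunpair n).
Proof. by rewrite /=; case: (cunpair n). Qed.

Lemma tri_S s : ((s.+1 * s.+2)./2) = (s * s.+1)./2 + s.+1.
Proof.
have -> : s.+1 * s.+2 = s * s.+1 + (s.+1).*2.
  by rewrite -mul2n mulnC -mulnDl addn2.
by rewrite halfD odd_double andbF add0n doubleK.
Qed.

Lemma cpair_nxt p : cpair (nxt p).1 (nxt p).2 = (cpair p.1 p.2).+1.
Proof.
case: p => [[|a] b] /=; rewrite /cpair.
  by rewrite !addn0 add0n tri_S addnS.
by rewrite addnS addSn addnS.
Qed.

Lemma cpair_cunpair n : cpair (cunpair n).1 (cunpair n).2 = n.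
Proof. elim: n => // n IH. by rewrite cunpairS cpair_nxt IH. Qed.

Lemma cunpair_onto a b : exists n, cunpair n = (a, b).
Proof.
move: {2}(a + b) (erefl (a + b)) => s; elim: s a b => [|s IH] a b.
  by case: a b => [|a] [|b] // _; exists 0.
elim: b a => [|b IHb] a.
  rewrite addn0 => ->. have [n Hn] := IH 0 s erefl. exists n.+1.
  by rewrite cunpairS Hn.
rewrite addnS => -[] Hs. have [n Hn] : exists n, cunpair n = (a.+1, b).
  by apply: IHb; rewrite addSn Hs.
exists n.+1. by rewrite cunpairS Hn.
Qed.

Lemma cunpair_cpair a b : cunpair (cpair a b) = (a, b).
Proof.
have [n Hn] := cunpair_onto a b.
have -> : cpair a b = n by rewrite -[n in RHS]cpair_cunpair Hn.
by [].
Qed.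

Lemma cpair_fst a b : (cunpair (cpair a b)).1 = a. Proof. by rewrite cunpair_cpair. Qed.
Lemma cpair_snd a b : (cunpair (cpair a b)).2 = b. Proof. by rewrite cunpair_cpair. Qed.

Lemma cpair_geq_l a b : a <= cpair a b.
Proof.
rewrite /cpair. have : a + b <= ((a + b) * (a + b).+1)./2.
  case: (a+b) => // s. rewrite tri_S. by rewrite leq_addl.
move=> H. apply: leq_trans (leq_addr b a) _. apply: leq_trans H _. exact: leq_addr.
Qed.
Lemma cpair_geq_r a b : b <= cpair a b.
Proof. rewrite /cpair. by rewrite leq_addl. Qed.

Lemma cunpair_le1 n : (cunpair n).1 <= n.
Proof. by rewrite -{2}(cpair_cunpair n) cpair_geq_l. Qed.
Lemma cunpair_le2 n : (cunpair n).2 <= n.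
Proof. by rewrite -{2}(cpair_cunpair n) cpair_geq_r. Qed.

Definition recloop (ef eg : nat -> option nat) (a : nat) :=
  fix r (n : nat) : option nat :=
           match n with
           | 0 => ef a
           | n'.+1 => obind (fun v => eg (cpair (cpair a n') v)) (r n')
           end.
Definition searchloop (ef : nat -> option nat) (x : nat) :=
  fix search (i m : nat) : option nat :=
           match i with
           | 0 => None
           | i'.+1 =>
             match ef (cpair x m) with
             | Some 0 => Some m
             | Some _ => search i' m.+1
             | None => None
             end
           end.

Lemma eval_rec k f g x : eval k.+1 (CRec f g) x =
  recloop (eval k f) (eval k g) (cunpair x).1 (cunpair x).2.
Proof. by rewrite /=; case: (cunpair x). Qed.
Lemma eval_mu k f x : eval k.+1 (CMu f) x = searchloop (eval k f) x k 0.
Proof. by []. Qed.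

Lemma eval_pair k f g x : eval k.+1 (CPair f g) x =
  obind (fun a => omap (cpair a) (eval k g x)) (eval k f x).
Proof. by []. Qed.
Lemma eval_comp k f g x : eval k.+1 (CComp f g) x = obind (eval k f) (eval k g x).
Proof. by []. Qed.

Lemma searchloop_S ef x i m : searchloop ef x i.+1 m =
  match ef (cpair x m) with Some 0 => Some m | Some _ => searchloop ef x i m.+1
  | None => None end.
Proof. by []. Qed.
Lemma recloop_S ef eg a n : recloop ef eg a n.+1 =
  obind (fun v => eg (cpair (cpair a n) v)) (recloop ef eg a n).
Proof. by []. Qed.

Lemma eval_mono k c x y : eval k c x = Some y -> eval k.+1 c x = Some y.
Proof.
elim: k c x y => [|k IH] c x y //.
case: c => //.
- move=> f g; rewrite !eval_pair. case E1: (eval k f x) => [a|] //. rewrite (IH _ _ _ E1).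
  case E2: (eval k g x) => [b|] //. by rewrite (IH _ _ _ E2).
- move=> f g; rewrite !eval_comp. case E1: (eval k g x) => [a|] //. rewrite (IH _ _ _ E1).
  by move/IH.
- move=> f g. rewrite !eval_rec. move: (cunpair x).1 (cunpair x).2 => a n.
  elim: n y => [|n IHn] y; first exact: IH.
  rewrite !recloop_S.
  case E: (recloop _ _ a n) => [v|] //. by rewrite (IHn _ E) /= => /IH.
- move=> f. rewrite !eval_mu.
  have : forall i j m, i <= j -> searchloop (eval k f) x i m = Some y ->
      searchloop (eval k.+1 f) x j m = Some y.
    elim=> [|i IHi] [|j] m // Hij. rewrite !searchloop_S.
    case E: (eval k f (cpair x m)) => [[|v]|] //; rewrite (IH _ _ _ E) //.
    exact: IHi.
  by apply; apply: leqnSn.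
Qed.

Lemma eval_monoL k k' c x y : k <= k' -> eval k c x = Some y -> eval k' c x = Some y.
Proof.
move=> /subnK <-. elim: (k' - k) => [|d IHd] //= H. by apply: eval_mono; apply: IHd.
Qed.

Lemma eval_det k k' c x y y' : eval k c x = Some y -> eval k' c x = Some y' -> y = y'.
Proof.
move=> H1 H2. have H1' := eval_monoL (leq_maxl k k') H1.
have H2' := eval_monoL (leq_maxr k k') H2. by rewrite H1' in H2'; case: H2'.
Qed.
Ltac cps := repeat progress (rewrite ?cpair_fst ?cpair_snd).

Definition comp (f : nat -> nat) :=
  exists c : code, forall x, exists k, eval k c x = Some (f x).

Fixpoint primrec (F G : nat -> nat) (a n : nat) : nat :=
  match n with 0 => F a | n'.+1 => G (cpair (cpair a n') (primrec F G a n')) end.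

Inductive pexp : Type :=
| PVar | PZero | PSucc of pexp | PFst of pexp | PSnd of pexp
| PPair of pexp & pexp | PComp of pexp & pexp | PRec of pexp & pexp
| PExt of (nat -> nat).

Fixpoint den (e : pexp) (x : nat) : nat :=
  match e with
  | PVar => x
  | PZero => 0
  | PSucc e => (den e x).+1
  | PFst e => (cunpair (den e x)).1
  | PSnd e => (cunpair (den e x)).2
  | PPair e1 e2 => cpair (den e1 x) (den e2 x)
  | PComp e1 e2 => den e1 (den e2 x)
  | PRec e1 e2 => primrec (den e1) (den e2) (cunpair x).1 (cunpair x).2
  | PExt f => f x
  end.

Fixpoint pok (e : pexp) : Prop :=
  match e with
  | PSucc e | PFst e | PSnd e => pok e
  | PPair e1 e2 | PComp e1 e2 | PRec e1 e2 => pok e1 /\ pok e2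
  | PExt f => comp f
  | _ => True
  end.

Lemma comp_ext f g : f =1 g -> comp f -> comp g.
Proof. move=> E [c Hc]; exists c => x; rewrite -E; exact: Hc. Qed.

Lemma comp_id : comp id.
Proof. exists (CPair CFst CSnd) => x; exists 2. by rewrite /= cpair_cunpair. Qed.

Lemma comp_zero : comp (fun _ => 0).
Proof. by exists CZero => x; exists 1. Qed.

Lemma comp_compose f g : comp f -> comp g -> comp (fun x => f (g x)).
Proof.
move=> [cf Hf] [cg Hg]; exists (CComp cf cg) => x.
have [k2 H2] := Hg x; have [k1 H1] := Hf (g x).
exists (maxn k1 k2).+1. rewrite eval_comp (eval_monoL (leq_maxr k1 k2) H2) /=.
exact: (eval_monoL (leq_maxl k1 k2) H1).
Qed.

Lemma comp_succ : comp succn.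
Proof. by exists CSucc => x; exists 1. Qed.
Lemma comp_fst : comp (fun x => (cunpair x).1).
Proof. by exists CFst => x; exists 1. Qed.
Lemma comp_snd : comp (fun x => (cunpair x).2).
Proof. by exists CSnd => x; exists 1. Qed.

Lemma comp_pair f g : comp f -> comp g -> comp (fun x => cpair (f x) (g x)).
Proof.
move=> [cf Hf] [cg Hg]; exists (CPair cf cg) => x.
have [k2 H2] := Hg x; have [k1 H1] := Hf x.
exists (maxn k1 k2).+1. rewrite eval_pair (eval_monoL (leq_maxl k1 k2) H1) /=.
by rewrite (eval_monoL (leq_maxr k1 k2) H2).
Qed.

Lemma recloop_monoL k k' f g a n v : k <= k' ->
  recloop (eval k f) (eval k g) a n = Some v ->
  recloop (eval k' f) (eval k' g) a n = Some v.
Proof.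
move=> Hk. have := @eval_monoL k.+1 k'.+1 (CRec f g) (cpair a n) v Hk.
by rewrite !eval_rec cpair_fst cpair_snd.
Qed.

Lemma comp_rec f g : comp f -> comp g ->
  comp (fun x => primrec f g (cunpair x).1 (cunpair x).2).
Proof.
move=> [cf Hf] [cg Hg]; exists (CRec cf cg) => x.
move: (cunpair x).1 (cunpair x).2 (fun k => eval_rec k cf cg x) => a n Er.
suff [K HK] : exists K, recloop (eval K cf) (eval K cg) a n = Some (primrec f g a n).
  by exists K.+1; rewrite Er.
clear Er; elim: n => [|n [K HK]]; first exact: Hf.
have [k2 H2] := Hg (cpair (cpair a n) (primrec f g a n)).
exists (maxn K k2). rewrite recloop_S (recloop_monoL (leq_maxl K k2) HK) /=.
exact: (eval_monoL (leq_maxr K k2) H2).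
Qed.

Theorem den_comp e : pok e -> comp (den e).
Proof.
elim: e => /=.
- by move=> _; apply: comp_id.
- by move=> _; apply: comp_zero.
- by move=> e IH /IH H; apply: (comp_compose comp_succ H).
- by move=> e IH /IH H; apply: (comp_compose comp_fst H).
- by move=> e IH /IH H; apply: (comp_compose comp_snd H).
- by move=> e1 IH1 e2 IH2 [/IH1 H1 /IH2 H2]; apply: comp_pair.
- by move=> e1 IH1 e2 IH2 [/IH1 H1 /IH2 H2]; apply: comp_compose.
- by move=> e1 IH1 e2 IH2 [/IH1 H1 /IH2 H2]; apply: comp_rec.
- done.
Qed.

(* projections for primrec step functions: input <<a,n>,v> *)
Definition RA := PFst (PFst PVar).
Definition RN := PSnd (PFst PVar).
Definition RV := PSnd PVar.

Fact precOn_key : unit. Proof. exact: tt. Qed.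
Definition precOn f g ea en := locked_with precOn_key (PComp (PRec f g) (PPair ea en)).
Lemma precOn_unlock f g ea en : precOn f g ea en = PComp (PRec f g) (PPair ea en). Proof. by rewrite /precOn; case: precOn_key. Qed.
Lemma den_precOn f g ea en x :
  den (precOn f g ea en) x = primrec (den f) (den g) (den ea x) (den en x).
Proof. rewrite precOn_unlock. by rewrite /= cpair_fst cpair_snd. Qed.

Fixpoint pconst n := match n with 0 => PZero | n'.+1 => PSucc (pconst n') end.
Lemma den_const n x : den (pconst n) x = n.
Proof. by elim: n => //= n ->. Qed.

Fact ppred_key : unit. Proof. exact: tt. Qed.
Definition ppred e := locked_with ppred_key (precOn PZero RN PZero e).
Lemma ppred_unlock e : ppred e = precOn PZero RN PZero e. Proof. by rewrite /ppred; case: ppred_key. Qed.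
Lemma den_pred e x : den (ppred e) x = (den e x).-1.
Proof. rewrite ppred_unlock. rewrite den_precOn /=. case: (den e x) => //= n. by rewrite cpair_fst cpair_snd. Qed.

Fact padd_key : unit. Proof. exact: tt. Qed.
Definition padd e1 e2 := locked_with padd_key (precOn PVar (PSucc RV) e1 e2).
Lemma padd_unlock e1 e2 : padd e1 e2 = precOn PVar (PSucc RV) e1 e2. Proof. by rewrite /padd; case: padd_key. Qed.
Lemma den_add e1 e2 x : den (padd e1 e2) x = den e1 x + den e2 x.
Proof. rewrite padd_unlock.
rewrite den_precOn. elim: (den e2 x) => [|n IH] /=; first by rewrite addn0.
by rewrite cpair_snd IH addnS.
Qed.

Fact psub_key : unit. Proof. exact: tt. Qed.
Definition psub e1 e2 := locked_with psub_key (precOn PVar (ppred RV) e1 e2).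
Lemma psub_unlock e1 e2 : psub e1 e2 = precOn PVar (ppred RV) e1 e2. Proof. by rewrite /psub; case: psub_key. Qed.
Lemma den_sub e1 e2 x : den (psub e1 e2) x = den e1 x - den e2 x.
Proof. rewrite psub_unlock.
rewrite den_precOn. elim: (den e2 x) => [|n IH] /=; first by rewrite subn0.
by rewrite den_pred /= cpair_snd IH subnS.
Qed.

Fact pite_key : unit. Proof. exact: tt. Qed.
Definition pite c e1 e2 := locked_with pite_key (precOn (PFst PVar) (PSnd RA) (PPair e1 e2) c).
Lemma pite_unlock c e1 e2 : pite c e1 e2 = precOn (PFst PVar) (PSnd RA) (PPair e1 e2) c. Proof. by rewrite /pite; case: pite_key. Qed.
Lemma den_ite c e1 e2 x :
  den (pite c e1 e2) x = if den c x is 0 then den e1 x else den e2 x.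
Proof. rewrite pite_unlock.
rewrite den_precOn. case: (den c x) => /= [|n]; first by rewrite cpair_fst.
by rewrite !cpair_fst cpair_snd.
Qed.

Fact peq_key : unit. Proof. exact: tt. Qed.
Definition peq e1 e2 := locked_with peq_key (pite (padd (psub e1 e2) (psub e2 e1)) (pconst 1) PZero).
Lemma peq_unlock e1 e2 : peq e1 e2 = pite (padd (psub e1 e2) (psub e2 e1)) (pconst 1) PZero. Proof. by rewrite /peq; case: peq_key. Qed.
Lemma den_eq e1 e2 x : den (peq e1 e2) x = (den e1 x == den e2 x).
Proof. rewrite peq_unlock.
rewrite den_ite den_add !den_sub !den_const.
move: (den e1 x) (den e2 x) => a b.
case E: (a - b + (b - a)) => [|m].
  have -> : a = b by lia.
  by rewrite eqxx.
by case: eqP => // H; exfalso; subst; rewrite subnn in E.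
Qed.

Definition lnil := 0.
Definition lcons a l := (cpair a l).+1.
Definition lhead l := (cunpair l.-1).1.
Definition ltail l := (cunpair l.-1).2.
Lemma lhead_cons a l : lhead (lcons a l) = a. Proof. by rewrite /lhead /= cpair_fst. Qed.
Lemma ltail_cons a l : ltail (lcons a l) = l. Proof. by rewrite /ltail /= cpair_snd. Qed.
Lemma lhead_nil : lhead 0 = 0. Proof. by []. Qed.
Lemma ltail_nil : ltail 0 = 0. Proof. by []. Qed.
Lemma ltail_lt l : 0 < l -> ltail l < l.
Proof. case: l => // l _. rewrite /ltail /=. rewrite ltnS. exact: cunpair_le2. Qed.
Lemma lhead_lt l : 0 < l -> lhead l < l.
Proof. case: l => // l _. rewrite /lhead /=. rewrite ltnS. exact: cunpair_le1. Qed.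

Fact pcons_key : unit. Proof. exact: tt. Qed.
Definition pcons e1 e2 := locked_with pcons_key (PSucc (PPair e1 e2)).
Lemma pcons_unlock e1 e2 : pcons e1 e2 = PSucc (PPair e1 e2). Proof. by rewrite /pcons; case: pcons_key. Qed.
Fact phead_key : unit. Proof. exact: tt. Qed.
Definition phead e := locked_with phead_key (PFst (ppred e)).
Lemma phead_unlock e : phead e = PFst (ppred e). Proof. by rewrite /phead; case: phead_key. Qed.
Fact ptail_key : unit. Proof. exact: tt. Qed.
Definition ptail e := locked_with ptail_key (PSnd (ppred e)).
Lemma ptail_unlock e : ptail e = PSnd (ppred e). Proof. by rewrite /ptail; case: ptail_key. Qed.
Lemma den_cons e1 e2 x : den (pcons e1 e2) x = lcons (den e1 x) (den e2 x). Proof. rewrite pcons_unlock. by []. Qed.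
Lemma den_head e x : den (phead e) x = lhead (den e x). Proof. rewrite phead_unlock. by rewrite /= den_pred. Qed.
Lemma den_tail e x : den (ptail e) x = ltail (den e x). Proof. rewrite ptail_unlock. by rewrite /= den_pred. Qed.

Fact piter_key : unit. Proof. exact: tt. Qed.
Definition piter f e0 en := locked_with piter_key (precOn PVar (PComp f RV) e0 en).
Lemma piter_unlock f e0 en : piter f e0 en = precOn PVar (PComp f RV) e0 en. Proof. by rewrite /piter; case: piter_key. Qed.
Lemma den_iter f e0 en x : den (piter f e0 en) x = iter (den en x) (den f) (den e0 x).
Proof. rewrite piter_unlock.
rewrite den_precOn. elim: (den en x) => [|n IH] //=. by rewrite cpair_snd IH.
Qed.

Fixpoint hist (G : nat -> nat) n :=
  match n with 0 => 0 | n'.+1 => lcons (G (cpair n' (hist G n'))) (hist G n') end.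
Definition strongF G n := G (cpair n (hist G n)).

Fact phist_key : unit. Proof. exact: tt. Qed.
Definition phist G := locked_with phist_key (precOn PZero (pcons (PComp G (PPair RN RV)) RV) PZero PVar).
Lemma phist_unlock G : phist G = precOn PZero (pcons (PComp G (PPair RN RV)) RV) PZero PVar. Proof. by rewrite /phist; case: phist_key. Qed.
Lemma den_hist G x : den (phist G) x = hist (den G) x.
Proof. rewrite phist_unlock.
rewrite den_precOn /=. elim: x => [|n IH] //=. by rewrite den_cons /=; cps; rewrite IH.
Qed.
Fact pstrong_key : unit. Proof. exact: tt. Qed.
Definition pstrong G := locked_with pstrong_key (PComp G (PPair PVar (phist G))).
Lemma pstrong_unlock G : pstrong G = PComp G (PPair PVar (phist G)). Proof. by rewrite /pstrong; case: pstrong_key. Qed.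
Lemma den_strong G x : den (pstrong G) x = strongF (den G) x.
Proof. rewrite pstrong_unlock. by rewrite /= den_hist. Qed.

Lemma hist_lookup G n i : i < n ->
  lhead (iter (n.-1 - i) ltail (hist G n)) = strongF G i.
Proof.
elim: n => // n IH. rewrite ltnS leq_eqVlt => /orP [/eqP ->|Hi] /=.
  by rewrite subnn /= lhead_cons.
have -> : n - i = (n.-1 - i).+1 by case: n IH Hi => // n _ Hi /=; rewrite subSn.
by rewrite iterSr ltail_cons IH.
Qed.

(* inside a strong-recursion body: input z = <n, hist>; lookup F i *)
Fact plook_key : unit. Proof. exact: tt. Qed.
Definition plook ei := locked_with plook_key (phead (piter (ptail PVar) (PSnd PVar) (psub (ppred (PFst PVar)) ei))).
Lemma plook_unlock ei : plook ei = phead (piter (ptail PVar) (PSnd PVar) (psub (ppred (PFst PVar)) ei)). Proof. by rewrite /plook; case: plook_key. Qed.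
Lemma den_look G ei n i : i < n -> den ei (cpair n (hist G n)) = i ->
  den (plook ei) (cpair n (hist G n)) = strongF G i.
Proof.
move=> Hi Ei. rewrite plook_unlock den_head den_iter den_sub den_pred Ei /= cpair_fst cpair_snd.
rewrite -(hist_lookup G Hi). congr lhead. apply: eq_iter => y. by rewrite den_tail.
Qed.
Definition lk G n i := lhead (iter (n.-1 - i) ltail (hist G n)).
Lemma lk_lt G n i : i < n -> lk G n i = strongF G i.
Proof. exact: hist_lookup. Qed.
Lemma den_lk G ei n :
  den (plook ei) (cpair n (hist G n)) = lk G n (den ei (cpair n (hist G n))).
Proof.
rewrite plook_unlock den_head den_iter den_sub den_pred /= cpair_fst cpair_snd /lk.
congr lhead. apply: eq_iter => y. by rewrite den_tail.
Qed.


Fact phalfodd_key : unit. Proof. exact: tt. Qed.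
Definition phalfodd e := locked_with phalfodd_key (precOn PZero
  (pite (PSnd RV) (PPair (PFst RV) (pconst 1)) (PPair (PSucc (PFst RV)) PZero)) PZero e).
Lemma phalfodd_unlock e : phalfodd e = precOn PZero
  (pite (PSnd RV) (PPair (PFst RV) (pconst 1)) (PPair (PSucc (PFst RV)) PZero)) PZero e. Proof. by rewrite /phalfodd; case: phalfodd_key. Qed.
Lemma den_halfodd e x : den (phalfodd e) x = cpair (den e x)./2 (odd (den e x)).
Proof. rewrite phalfodd_unlock.
rewrite den_precOn. elim: (den e x) => [|n IH] //=.
rewrite den_ite /=; cps; rewrite IH; cps.
rewrite uphalf_half. by case: (odd n); rewrite /= ?den_const.
Qed.
Fact phalf_key : unit. Proof. exact: tt. Qed.
Definition phalf e := locked_with phalf_key (PFst (phalfodd e)).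
Lemma phalf_unlock e : phalf e = PFst (phalfodd e). Proof. by rewrite /phalf; case: phalf_key. Qed.
Fact podd_key : unit. Proof. exact: tt. Qed.
Definition podd e := locked_with podd_key (PSnd (phalfodd e)).
Lemma podd_unlock e : podd e = PSnd (phalfodd e). Proof. by rewrite /podd; case: podd_key. Qed.
Lemma den_half e x : den (phalf e) x = (den e x)./2.
Proof. rewrite phalf_unlock. by rewrite /= den_halfodd cpair_fst. Qed.
Lemma den_odd e x : den (podd e) x = odd (den e x).
Proof. rewrite podd_unlock. by rewrite /= den_halfodd cpair_snd. Qed.


Fact pnz_key : unit. Proof. exact: tt. Qed.
Definition pnz e := locked_with pnz_key (pite e PZero (pconst 1)).
Lemma pnz_unlock e : pnz e = pite e PZero (pconst 1). Proof. by rewrite /pnz; case: pnz_key. Qed.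
Fact pisz_key : unit. Proof. exact: tt. Qed.
Definition pisz e := locked_with pisz_key (pite e (pconst 1) PZero).
Lemma pisz_unlock e : pisz e = pite e (pconst 1) PZero. Proof. by rewrite /pisz; case: pisz_key. Qed.
Fact pand_key : unit. Proof. exact: tt. Qed.
Definition pand a b := locked_with pand_key (pite a PZero b).
Lemma pand_unlock a b : pand a b = pite a PZero b. Proof. by rewrite /pand; case: pand_key. Qed.
Lemma den_nz e x : den (pnz e) x = (den e x != 0).
Proof. rewrite pnz_unlock. by rewrite den_ite den_const; case: (den e x). Qed.
Lemma den_isz e x : den (pisz e) x = (den e x == 0).
Proof. rewrite pisz_unlock. by rewrite den_ite den_const; case: (den e x). Qed.
Lemma den_and a b x : den (pand a b) x = if den a x is 0 then 0 else den b x.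
Proof. rewrite pand_unlock. by rewrite den_ite. Qed.
Ltac pok_tac := repeat progress rewrite ?precOn_unlock ?ppred_unlock ?padd_unlock ?psub_unlock ?pite_unlock ?peq_unlock ?pcons_unlock ?phead_unlock ?ptail_unlock ?piter_unlock ?phist_unlock ?pstrong_unlock ?plook_unlock ?phalfodd_unlock ?phalf_unlock ?podd_unlock ?pnz_unlock ?pisz_unlock ?pand_unlock; simpl; intuition.

Lemma strongF_eq G n : strongF G n = G (cpair n (hist G n)). Proof. by []. Qed.
Opaque hist lk strongF.
Lemma den_PVar x : den PVar x = x. Proof. by []. Qed.
Lemma den_PZero x : den PZero x = 0. Proof. by []. Qed.
Lemma den_PSucc e x : den (PSucc e) x = (den e x).+1. Proof. by []. Qed.
Lemma den_PFst e x : den (PFst e) x = (cunpair (den e x)).1. Proof. by []. Qed.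
Lemma den_PSnd e x : den (PSnd e) x = (cunpair (den e x)).2. Proof. by []. Qed.
Lemma den_PPair e1 e2 x : den (PPair e1 e2) x = cpair (den e1 x) (den e2 x). Proof. by []. Qed.
Lemma den_PComp e1 e2 x : den (PComp e1 e2) x = den e1 (den e2 x). Proof. by []. Qed.
Lemma den_PExt f x : den (PExt f) x = f x. Proof. by []. Qed.
Ltac den_simp := repeat progress (rewrite ?den_lk ?den_strong ?den_and ?den_nz ?den_isz ?den_eq ?den_half ?den_odd ?den_iter ?den_add ?den_sub ?den_ite ?den_cons ?den_head ?den_tail
  ?den_pred ?den_const ?den_PVar ?den_PZero ?den_PSucc ?den_PFst ?den_PSnd ?den_PPair ?den_PComp ?den_PExt ?cpair_fst ?cpair_snd ?lhead_cons ?ltail_cons).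


Fixpoint lenc (s : seq nat) : nat := if s is a :: s' then lcons a (lenc s') else 0.

Notation SN := (PFst PVar).

Definition DG := pite SN PZero
  (pite (podd SN) (pcons (PSucc (phead (plook (phalf SN)))) (ptail (plook (phalf SN))))
        (pcons PZero (plook (phalf SN)))).
Definition Dp := pstrong DG.

Lemma decode_odd g : odd g -> CodeSeq.decode g = 0 :: CodeSeq.decode g./2.
Proof.
move=> Ho.
have E : g = CodeSeq.code (0 :: CodeSeq.decode g./2).
  by rewrite /= expn0 mul1n CodeSeq.decodeK -{1}[g]odd_double_half Ho add1n.
by rewrite {1}E CodeSeq.codeK.
Qed.

Lemma decode_even g : 0 < g -> ~~ odd g -> exists t l,
  CodeSeq.decode g./2 = t :: l /\ CodeSeq.decode g = t.+1 :: l.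
Proof.
move=> Hg Ho. case E: (CodeSeq.decode g./2) => [|t l].
  have : CodeSeq.code (CodeSeq.decode g./2) = 0 by rewrite E.
  rewrite CodeSeq.decodeK => H. move: Hg; rewrite -[g]odd_double_half H.
  by rewrite (negbTE Ho).
exists t, l; split => //.
have {}E : g = CodeSeq.code (t.+1 :: l).
  rewrite /= expnS -mulnA. have <- : CodeSeq.code (t :: l) = 2 ^ t * (CodeSeq.code l).*2.+1 by [].
  rewrite -E CodeSeq.decodeK mul2n. by rewrite -[LHS]odd_double_half (negbTE Ho).
by rewrite {1}E CodeSeq.codeK.
Qed.

Lemma Dp_spec g : den Dp g = lenc (CodeSeq.decode g).
Proof.
elim/ltn_ind: g => g IH. rewrite /Dp den_strong strongF_eq {1}/DG. den_simp.
case: g IH => [|g] IH; first by [].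
have Hlt : g.+1./2 < g.+1 by lia.
rewrite lk_lt //. have -> : strongF (den DG) g.+1./2 = den Dp g.+1./2.
  by rewrite /Dp den_strong.
rewrite IH //.
case Ho: (odd g.+1).
  by rewrite (decode_odd Ho).
have [t [l [E1 E2]]] := decode_even (ltn0Sn g) (negbT Ho).
by rewrite E1 E2 /= ?lhead_cons ?ltail_cons.
Qed.

Definition elemdec (e : nat) : option (nat + unit) :=
  match CodeSeq.decode e with
  | [:: ni; nx] => if CodeSeq.decode nx is _ :: _ then Some (inr tt)
                   else omap inl (ohead (CodeSeq.decode ni))
  | _ => None end.
Lemma elemdecE e : (unpickle e : option (nat + unit)) = elemdec e.
Proof.
rewrite /unpickle /= /pcomp /=. rewrite /unpickle /= /pcomp /=.
rewrite /unpickle /= /unpickle_tagged /elemdec.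
case: (CodeSeq.decode e) => [|ni [|nx [|? ?]]] //=.
case: (CodeSeq.decode nx) => [|a l] //=.
rewrite /sum_of_opair /pair_of_tag /=. by case: (CodeSeq.decode ni).
Qed.
Lemma unp_code g : (unpickle g : option code) =
  obind tree_to_code (GenTree.decode (pmap elemdec (CodeSeq.decode g))).
Proof.
rewrite /unpickle /= /pcomp. congr obind. rewrite /unpickle /= /pcomp /=.
congr GenTree.decode. apply: eq_pmap => e. exact: elemdecE.
Qed.

Fact Dof_key : unit. Proof. exact: tt. Qed.
Definition Dof e := locked_with Dof_key (PComp Dp e).
Lemma Dof_unlock e : Dof e = PComp Dp e. Proof. by rewrite /Dof; case: Dof_key. Qed.
Lemma den_Dof e x : den (Dof e) x = lenc (CodeSeq.decode (den e x)).
Proof. by rewrite Dof_unlock /= Dp_spec. Qed.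

Definition edenc (o : option (nat + unit)) :=
  match o with None => 0 | Some (inr _) => 1 | Some (inl n) => n.+2 end.

Fact EDp_key : unit. Proof. exact: tt. Qed.
Definition EDp  := locked_with EDp_key (
  pite (pand (pnz (Dof PVar)) (pand (pnz (ptail (Dof PVar))) (pisz (ptail (ptail (Dof PVar))))))
    PZero
    (pite (Dof (phead (ptail (Dof PVar))))
       (pite (Dof (phead (Dof PVar))) PZero (PSucc (PSucc (phead (Dof (phead (Dof PVar)))))))
       (pconst 1))).
Lemma EDp_unlock  : EDp  = 
  pite (pand (pnz (Dof PVar)) (pand (pnz (ptail (Dof PVar))) (pisz (ptail (ptail (Dof PVar))))))
    PZero
    (pite (Dof (phead (ptail (Dof PVar))))
       (pite (Dof (phead (Dof PVar))) PZero (PSucc (PSucc (phead (Dof (phead (Dof PVar)))))))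
       (pconst 1)). Proof. by rewrite /EDp; case: EDp_key. Qed.

Lemma EDp_spec e : den EDp e = edenc (elemdec e).
Proof.
rewrite EDp_unlock /elemdec. do 4 (den_simp; rewrite ?den_Dof).
case: (CodeSeq.decode e) => [|ni [|nx [|a l]]] //=; rewrite ?ltail_cons //=.
rewrite ?lhead_cons.
case: (CodeSeq.decode nx) => [|b l'] //=.
by case: (CodeSeq.decode ni) => [|c l''] //=; rewrite ?lhead_cons.
Qed.

Fixpoint tenc (t : GenTree.tree unit) : nat :=
  match t with GenTree.Leaf _ => 0 | GenTree.Node n f => lcons n (lenc (map tenc f)) end.

Definition fenc (p : seq (GenTree.tree unit) * seq (seq (GenTree.tree unit))) :=
  cpair (lenc (map tenc p.1)) (lenc (map (fun f => lenc (map tenc f)) p.2)).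

Notation FS := (plook (ptail SN)).
Notation FDd := (PComp EDp (phead SN)).
Definition FG := pite SN (PPair PZero PZero)
  (pite FDd FS
    (pite (ppred FDd) (PPair (pcons PZero (PFst FS)) (PSnd FS))
      (pite (ppred (ppred FDd)) (PPair PZero (pcons (PFst FS) (PSnd FS)))
         (PPair (pcons (pcons (psub FDd (pconst 3)) (PFst FS)) (phead (PSnd FS)))
                (ptail (PSnd FS)))))).
Fact FDp_key : unit. Proof. exact: tt. Qed.
Definition FDp := locked_with FDp_key (pstrong FG).
Lemma FDp_unlock : FDp = pstrong FG. Proof. by rewrite /FDp; case: FDp_key. Qed.

Lemma lenc_gt0 a l : 0 < lenc (a :: l). Proof. by []. Qed.

Lemma FDp_spec l : den FDp (lenc l) =
  fenc (foldr (@GenTree.decode_step unit) ([::], [::]) (pmap elemdec l)).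
Proof.
elim: l => [|a l IH].
  by rewrite FDp_unlock den_strong strongF_eq {1}/FG; den_simp.
rewrite FDp_unlock den_strong strongF_eq {1}/FG. den_simp.
rewrite /= ?ltail_cons ?lhead_cons EDp_spec.
have Hlt : lenc l < lenc (a :: l) by rewrite /= /lcons ltnS cpair_geq_r.
rewrite lk_lt //.
have -> : strongF (den FG) (lenc l) = den FDp (lenc l) by rewrite FDp_unlock den_strong.
rewrite IH /=.
case: (elemdec a) => [[n|[]]|] //=.
- case: (foldr _ _ _) => fs1 fs2 /=. rewrite /fenc /=. cps.
  case: n => [|n] /=; cps; first by [].
  have -> : n.+3 - 3 = n by lia.
  by case: fs2 => [|f fs2] //=; rewrite ?lhead_cons ?ltail_cons.
- case: (foldr _ _ _) => fs1 fs2 /=. by rewrite /fenc /=; cps.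
Qed.

Lemma lhead_le l : lhead l <= l.
Proof. case: l => // l. rewrite /lhead /= ltnW // ltnS. exact: cunpair_le1. Qed.
Lemma ltail_le l : ltail l <= l.
Proof. case: l => // l. rewrite /ltail /= ltnW // ltnS. exact: cunpair_le2. Qed.
Lemma lcons_gt_r a l : l < lcons a l.
Proof. by rewrite /lcons ltnS cpair_geq_r. Qed.
Lemma lcons_gt_l a l : a < lcons a l.
Proof. by rewrite /lcons ltnS cpair_geq_l. Qed.

Notation WCH := (ptail SN).
Definition WG := pite SN PZero
   (pite (psub (phead SN) (pconst 3)) (pisz WCH)
     (pite (psub (phead SN) (pconst 6))
        (pand (pnz WCH) (pand (pnz (ptail WCH)) (pand (pisz (ptail (ptail WCH)))
           (pand (plook (phead WCH)) (plook (phead (ptail WCH)))))))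
        (pite (psub (phead SN) (pconst 7))
           (pand (pnz WCH) (pand (pisz (ptail WCH)) (plook (phead WCH)))) PZero))).
Fact WFp_key : unit. Proof. exact: tt. Qed.
Definition WFp := locked_with WFp_key (pstrong WG).
Lemma WFp_unlock : WFp = pstrong WG. Proof. by rewrite /WFp; case: WFp_key. Qed.

Lemma WF_node n ch : den WFp (lcons n ch) =
  if n <= 3 then nat_of_bool (ch == 0) else
  if n <= 6 then (if (ch != 0) && (ltail ch != 0) && (ltail (ltail ch) == 0) then
                   (if den WFp (lhead ch) is 0 then 0 else den WFp (lhead (ltail ch))) else 0)
  else if n == 7 then (if (ch != 0) && (ltail ch == 0) then den WFp (lhead ch) else 0)
  else 0.
Proof.
rewrite WFp_unlock den_strong strongF_eq {1}/WG. den_simp.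
rewrite ?lhead_cons ?ltail_cons.
have H1 : lhead ch < lcons n ch := leq_ltn_trans (lhead_le ch) (lcons_gt_r n ch).
have H2 : lhead (ltail ch) < lcons n ch.
  apply: leq_ltn_trans (lhead_le _) _. apply: leq_ltn_trans (ltail_le _) _. exact: lcons_gt_r.
rewrite !lk_lt //.
have E : forall x, strongF (den WG) x = den WFp x by move=> x; rewrite WFp_unlock den_strong.
rewrite !E [lcons n ch]/lcons. clear H1 H2 E.
case: n => [|[|[|[|[|[|[|[|n]]]]]]]] /=;
 case: (ch == 0); case: (ltail ch == 0); case: (ltail (ltail ch) == 0); 
 case: (den WFp (lhead ch)) => //.
Qed.

Lemma WF_zero : den WFp 0 = 0.
Proof. by rewrite WFp_unlock den_strong strongF_eq {1}/WG; den_simp. Qed.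

Lemma WF_spec t : den WFp (tenc t) = (tree_to_code t != None) /\
  forall c, tree_to_code t = Some c -> code_to_tree c = t.
Proof.
elim/GenTree.tree_ind: t => [[]|n f IH]; first by rewrite /= WF_zero.
rewrite [tenc _]/= WF_node.
case: f IH => [|t1 [|t2 [|t3 f]]] IH;
 rewrite /= ?ltail_cons ?lhead_cons /=.
- case: n => [|[|[|[|[|[|[|[|n]]]]]]]] //=; split => // c [<-] //.
- move: IH => [[W1 C1] _].
  case: n => [|[|[|[|[|[|[|[|n]]]]]]]] //=.
  rewrite W1. case E: (tree_to_code t1) => [c1|] //=. split => // c [<-] /=.
  by rewrite (C1 _ E).
- move: IH => [[W1 C1] [[W2 C2] _]].
  case: n => [|[|[|[|[|[|[|[|n]]]]]]]] //=; rewrite W1 W2;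
  case E1: (tree_to_code t1) => [c1|] //=; case E2: (tree_to_code t2) => [c2|] //=;
  split => // c [<-] /=; by rewrite (C1 _ E1) (C2 _ E2).
- case: n => [|[|[|[|[|[|[|[|n]]]]]]]] //=.
Qed.

Definition TGfs1 := PFst (PComp FDp (Dof PVar)).
Fact TGp_key : unit. Proof. exact: tt. Qed.
Definition TGp := locked_with TGp_key
  (pite TGfs1 (pconst 1) (pite (PComp WFp (phead TGfs1)) (pconst 1) (phead TGfs1))).
Lemma TGp_unlock : TGp =
  (pite TGfs1 (pconst 1) (pite (PComp WFp (phead TGfs1)) (pconst 1) (phead TGfs1))).
Proof. by rewrite /TGp; case: TGp_key. Qed.

Lemma TGp_spec g : den TGp g = tenc (code_to_tree (decode g)).
Proof.
rewrite TGp_unlock /TGfs1 /decode unp_code. den_simp.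
rewrite den_Dof den_PVar FDp_spec /GenTree.decode.
case: (foldr _ _ _) => [[|t fs1] fs2]; rewrite /fenc; cps => //=.
rewrite ?lhead_cons. have [W C] := WF_spec t. rewrite W.
case E: (tree_to_code t) => [c|] //=. by rewrite (C _ E).
Qed.

Definition S_eval k t x st := cpair (cpair 0 (cpair k (cpair t x))) st.
Definition S_ret r st := cpair (cpair 1 r) st.
Definition FP1 k g x := cpair 0 (cpair k (cpair g x)).
Definition FP2 a := cpair 1 a.
Definition FCO k f := cpair 2 (cpair k f).
Definition FRE k g a i m := cpair 3 (cpair k (cpair g (cpair a (cpair i m)))).
Definition FMU k f x i m := cpair 4 (cpair k (cpair f (cpair x (cpair i m)))).

Definition mkEval k t x := PPair PZero (PPair k (PPair t x)).
Definition mkRet r := PPair (pconst 1) r.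
Definition mkFP1 k g x := PPair PZero (PPair k (PPair g x)).
Definition mkFP2 a := PPair (pconst 1) a.
Definition mkFCO k f := PPair (pconst 2) (PPair k f).
Definition mkFRE k g a i m := PPair (pconst 3) (PPair k (PPair g (PPair a (PPair i m)))).
Definition mkFMU k f x i m := PPair (pconst 4) (PPair k (PPair f (PPair x (PPair i m)))).

Notation CT := (PFst PVar).
Notation ST := (PSnd PVar).
Notation ctag := (PFst CT).
Notation cp := (PSnd CT).
Notation ek := (PFst cp).
Notation et := (PFst (PSnd cp)).
Notation ex := (PSnd (PSnd cp)).
Notation ttag := (phead et).
Notation c1 := (phead (ptail et)).
Notation c2 := (phead (ptail (ptail et))).
Notation kk := (ppred ek).
Notation fr := (phead ST).
Notation rest := (ptail ST).
Notation ftag := (PFst fr).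
Notation fp := (PSnd fr).
Notation yy := (ppred cp).
Notation f1 := (PFst fp).
Notation f2 := (PFst (PSnd fp)).
Notation f3 := (PFst (PSnd (PSnd fp))).
Notation f4 := (PFst (PSnd (PSnd (PSnd fp)))).
Notation f5 := (PSnd (PSnd (PSnd (PSnd fp)))).

Definition EVALcase :=
  pite ek (PPair (mkRet PZero) ST)
  (pite ttag (PPair (mkRet (pconst 1)) ST)
  (pite (psub ttag (pconst 1)) (PPair (mkRet (PSucc (PSucc ex))) ST)
  (pite (psub ttag (pconst 2)) (PPair (mkRet (PSucc (PFst ex))) ST)
  (pite (psub ttag (pconst 3)) (PPair (mkRet (PSucc (PSnd ex))) ST)
  (pite (psub ttag (pconst 4)) (PPair (mkEval kk c1 ex) (pcons (mkFP1 kk c2 ex) ST))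
  (pite (psub ttag (pconst 5)) (PPair (mkEval kk c2 ex) (pcons (mkFCO kk c1) ST))
  (pite (psub ttag (pconst 6)) (PPair (mkEval kk c1 (PFst ex))
                                      (pcons (mkFRE kk c2 (PFst ex) PZero (PSnd ex)) ST))
  (pite kk (PPair (mkRet PZero) ST)
     (PPair (mkEval kk c1 (PPair ex PZero)) (pcons (mkFMU kk c1 ex (ppred kk) PZero) ST)))))))))).

Definition RETcase :=
  pite ST PVar
  (pite cp (PPair (mkRet PZero) rest)
  (pite ftag (PPair (mkEval f1 f2 (PSnd (PSnd fp))) (pcons (mkFP2 yy) rest))
  (pite (psub ftag (pconst 1)) (PPair (mkRet (PSucc (PPair fp yy))) rest)
  (pite (psub ftag (pconst 2)) (PPair (mkEval (PFst fp) (PSnd fp) yy) rest)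
  (pite (psub ftag (pconst 3))
     (pite (peq f4 f5)
        (PPair (mkEval f1 f2 (PPair (PPair f3 f4) yy)) (pcons (mkFRE f1 f2 f3 (PSucc f4) f5) rest))
        (PPair (mkRet cp) rest))
  (pite yy (PPair (mkRet (PSucc f5)) rest)
    (pite f4 (PPair (mkRet PZero) rest)
      (PPair (mkEval f1 f2 (PPair f3 (PSucc f5))) (pcons (mkFMU f1 f2 f3 (ppred f4) (PSucc f5)) rest))))))))).

Fact STEP_key : unit. Proof. exact: tt. Qed.
Definition STEP := locked_with STEP_key (pite ctag EVALcase RETcase).
Lemma STEP_unlock : STEP = pite ctag EVALcase RETcase.
Proof. by rewrite /STEP; case: STEP_key. Qed.

Definition stepF := den STEP.

Definition ctenc c := tenc (code_to_tree c).

Ltac step_tac := rewrite /stepF STEP_unlock /EVALcase /RETcase /mkEval /mkRet /mkFP1 /mkFP2 /mkFCO /mkFRE /mkFMU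
  /S_eval /S_ret /FP1 /FP2 /FCO /FRE /FMU; den_simp; repeat progress rewrite ?lhead_cons ?ltail_cons; rewrite /=.

Lemma step_eval0 t x st : stepF (S_eval 0 t x st) = S_ret 0 st.
Proof. by step_tac. Qed.
Lemma step_zero k x st : stepF (S_eval k.+1 (lcons 0 0) x st) = S_ret 1 st.
Proof. by step_tac. Qed.
Lemma step_succ k x st : stepF (S_eval k.+1 (lcons 1 0) x st) = S_ret x.+2 st.
Proof. by step_tac. Qed.
Lemma step_fst k x st : stepF (S_eval k.+1 (lcons 2 0) x st) = S_ret (cunpair x).1.+1 st.
Proof. by step_tac. Qed.
Lemma step_snd k x st : stepF (S_eval k.+1 (lcons 3 0) x st) = S_ret (cunpair x).2.+1 st.
Proof. by step_tac. Qed.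
Lemma step_pair k t1 t2 x st : stepF (S_eval k.+1 (lcons 4 (lcons t1 (lcons t2 0))) x st) =
  S_eval k t1 x (lcons (FP1 k t2 x) st).
Proof. by step_tac. Qed.
Lemma step_comp k t1 t2 x st : stepF (S_eval k.+1 (lcons 5 (lcons t1 (lcons t2 0))) x st) =
  S_eval k t2 x (lcons (FCO k t1) st).
Proof. by step_tac. Qed.
Lemma step_rec k t1 t2 x st : stepF (S_eval k.+1 (lcons 6 (lcons t1 (lcons t2 0))) x st) =
  S_eval k t1 (cunpair x).1 (lcons (FRE k t2 (cunpair x).1 0 (cunpair x).2) st).
Proof. by step_tac. Qed.
Lemma step_mu0 t1 x st : stepF (S_eval 1 (lcons 7 (lcons t1 0)) x st) = S_ret 0 st.
Proof. by step_tac. Qed.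
Lemma step_mu k t1 x st : stepF (S_eval k.+2 (lcons 7 (lcons t1 0)) x st) =
  S_eval k.+1 t1 (cpair x 0) (lcons (FMU k.+1 t1 x k 0) st).
Proof. by step_tac. Qed.
Lemma ret_none f st : stepF (S_ret 0 (lcons f st)) = S_ret 0 st.
Proof. by step_tac. Qed.
Lemma ret_halt r : stepF (S_ret r 0) = S_ret r 0.
Proof. by step_tac. Qed.
Lemma ret_fp1 y k g x st : stepF (S_ret y.+1 (lcons (FP1 k g x) st)) = S_eval k g x (lcons (FP2 y) st).
Proof. by step_tac. Qed.
Lemma ret_fp2 y a st : stepF (S_ret y.+1 (lcons (FP2 a) st)) = S_ret (cpair a y).+1 st.
Proof. by step_tac. Qed.
Lemma ret_fco y k f st : stepF (S_ret y.+1 (lcons (FCO k f) st)) = S_eval k f y st.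
Proof. by step_tac. Qed.
Lemma ret_fre_done y k g a m st : stepF (S_ret y.+1 (lcons (FRE k g a m m) st)) = S_ret y.+1 st.
Proof. by step_tac; rewrite eqxx. Qed.
Lemma ret_fre_cont y k g a i m st : i != m ->
  stepF (S_ret y.+1 (lcons (FRE k g a i m) st)) =
  S_eval k g (cpair (cpair a i) y) (lcons (FRE k g a i.+1 m) st).
Proof. by move/negbTE => H; step_tac; rewrite H. Qed.
Lemma ret_fmu_found k f x i m st : stepF (S_ret 1 (lcons (FMU k f x i m) st)) = S_ret m.+1 st.
Proof. by step_tac. Qed.
Lemma ret_fmu_stop y k f x m st : stepF (S_ret y.+2 (lcons (FMU k f x 0 m) st)) = S_ret 0 st.
Proof. by step_tac. Qed.
Lemma ret_fmu_cont y k f x i m st : stepF (S_ret y.+2 (lcons (FMU k f x i.+1 m) st)) =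
  S_eval k f (cpair x m.+1) (lcons (FMU k f x i m.+1) st).
Proof. by step_tac. Qed.

Definition reach s s' := exists n, iter n stepF s = s'.
Lemma reach_refl s : reach s s. Proof. by exists 0. Qed.
Lemma reach_trans s1 s2 s3 : reach s1 s2 -> reach s2 s3 -> reach s1 s3.
Proof. move=> [n1 <-] [n2 <-]; exists (n2 + n1); by rewrite iterD. Qed.
Lemma reach_step s s2 s3 : stepF s = s2 -> reach s2 s3 -> reach s s3.
Proof. move=> H; apply: reach_trans; exists 1; by rewrite /= H. Qed.

Definition oenc (o : option nat) := if o is Some y then y.+1 else 0.

Lemma ctenc_zero : ctenc CZero = lcons 0 0. Proof. by []. Qed.
Lemma ctenc_succ : ctenc CSucc = lcons 1 0. Proof. by []. Qed.
Lemma ctenc_fst : ctenc CFst = lcons 2 0. Proof. by []. Qed.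
Lemma ctenc_snd : ctenc CSnd = lcons 3 0. Proof. by []. Qed.
Lemma ctenc_pair f g : ctenc (CPair f g) = lcons 4 (lcons (ctenc f) (lcons (ctenc g) 0)). Proof. by []. Qed.
Lemma ctenc_comp f g : ctenc (CComp f g) = lcons 5 (lcons (ctenc f) (lcons (ctenc g) 0)). Proof. by []. Qed.
Lemma ctenc_rec f g : ctenc (CRec f g) = lcons 6 (lcons (ctenc f) (lcons (ctenc g) 0)). Proof. by []. Qed.
Lemma ctenc_mu f : ctenc (CMu f) = lcons 7 (lcons (ctenc f) 0). Proof. by []. Qed.

Lemma recloop_none ef eg a i j : recloop ef eg a i = None -> i <= j -> recloop ef eg a j = None.
Proof.
move=> H. elim: j => [|j IH]; first by rewrite leqn0 => /eqP E; rewrite -E.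
rewrite leq_eqVlt => /orP [/eqP <- //|]. rewrite ltnS => /IH.
by rewrite recloop_S => ->.
Qed.

Lemma sim k c x st : reach (S_eval k (ctenc c) x st) (S_ret (oenc (eval k c x)) st).
Proof.
elim: k c x st => [|k IH] c x st.
  by apply: reach_step (step_eval0 _ _ _) (reach_refl _).
case: c.
- by rewrite ctenc_zero; apply: reach_step (step_zero _ _ _) (reach_refl _).
- by rewrite ctenc_succ; apply: reach_step (step_succ _ _ _) (reach_refl _).
- by rewrite ctenc_fst; apply: reach_step (step_fst _ _ _) (reach_refl _).
- by rewrite ctenc_snd; apply: reach_step (step_snd _ _ _) (reach_refl _).
- move=> f g. rewrite ctenc_pair eval_pair. apply: reach_step (step_pair _ _ _ _ _) _.
  apply: reach_trans (IH _ _ _) _.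
  case: (eval k f x) => [a|] /=; last by apply: reach_step (ret_none _ _) (reach_refl _).
  apply: reach_step (ret_fp1 _ _ _ _ _) _. apply: reach_trans (IH _ _ _) _.
  case: (eval k g x) => [b|] /=; last by apply: reach_step (ret_none _ _) (reach_refl _).
  by apply: reach_step (ret_fp2 _ _ _) (reach_refl _).
- move=> f g. rewrite ctenc_comp eval_comp. apply: reach_step (step_comp _ _ _ _ _) _.
  apply: reach_trans (IH _ _ _) _.
  case: (eval k g x) => [v|] /=; last by apply: reach_step (ret_none _ _) (reach_refl _).
  apply: reach_step (ret_fco _ _ _ _) _. exact: IH.
- move=> f g. rewrite ctenc_rec eval_rec. apply: reach_step (step_rec _ _ _ _ _) _.
  move: (cunpair x).1 (cunpair x).2 => a n.
  apply: reach_trans (IH _ _ _) _.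
  have Hl : forall d i, n - i = d -> i <= n ->
     reach (S_ret (oenc (recloop (eval k f) (eval k g) a i)) (lcons (FRE k (ctenc g) a i n) st))
           (S_ret (oenc (recloop (eval k f) (eval k g) a n)) st).
    elim=> [|d IHd] i Hd Hi.
      have -> : i = n by lia.
      case E: (recloop _ _ a n) => [v|] /=.
        by apply: reach_step (ret_fre_done _ _ _ _ _ _) (reach_refl _).
      by apply: reach_step (ret_none _ _) (reach_refl _).
    case E: (recloop _ _ a i) => [v|] /=; last first.
      rewrite (recloop_none E Hi) /=. by apply: reach_step (ret_none _ _) (reach_refl _).
    have Hin : i != n by apply/eqP; lia.
    apply: reach_step (ret_fre_cont _ _ _ _ _ Hin) _.
    apply: reach_trans (IH _ _ _) _.
    have -> : eval k g (cpair (cpair a i) v) = recloop (eval k f) (eval k g) a i.+1.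
      by rewrite recloop_S E.
    apply: IHd; lia.
  by apply: Hl; rewrite ?subn0.
- move=> f. rewrite ctenc_mu. case: k IH => [|k] IH.
    by apply: reach_step (step_mu0 _ _ _) (reach_refl _).
  apply: reach_step (step_mu _ _ _ _) _. rewrite eval_mu.
  have Hl : forall i m, reach (S_eval k.+1 (ctenc f) (cpair x m) (lcons (FMU k.+1 (ctenc f) x i m) st))
       (S_ret (oenc (searchloop (eval k.+1 f) x i.+1 m)) st).
    elim=> [|i IHi] m; apply: reach_trans (IH _ _ _) _; rewrite searchloop_S;
      case: (eval k.+1 f (cpair x m)) => [[|y]|];
      first [by apply: reach_step (ret_none _ _) (reach_refl _)
            | by apply: reach_step (ret_fmu_found _ _ _ _ _ _) (reach_refl _)
            | by apply: reach_step (ret_fmu_stop _ _ _ _ _ _) (reach_refl _)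
            | apply: reach_step (ret_fmu_cont _ _ _ _ _ _ _) _; exact: IHi].
  exact: Hl.
Qed.

Lemma halt_stay r n : iter n stepF (S_ret r 0) = S_ret r 0.
Proof. elim: n => //= n ->. exact: ret_halt. Qed.

Lemma S_ret_inj r r' : S_ret r 0 = S_ret r' 0 -> r = r'.
Proof.
rewrite /S_ret => H. have := congr1 (fun s => (cunpair (cunpair s).1).2) H. by cps.
Qed.

Lemma sim_det k c x n r : iter n stepF (S_eval k (ctenc c) x 0) = S_ret r 0 ->
  r = oenc (eval k c x).
Proof.
have [n0 H0] := sim k c x 0. move=> H.
case: (leqP n n0) => Hn.
  move: H0. rewrite -(subnK Hn) iterD H halt_stay. exact: S_ret_inj.
move: H. rewrite -(subnK (ltnW Hn)) iterD H0 halt_stay => /S_ret_inj ->. by [].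
Qed.

Definition EvS k t x n := iter n stepF (S_eval k t x 0).
Definition haltb s := ((cunpair s).2 == 0) && ((cunpair (cunpair s).1).1 == 1).
Definition resv s := (cunpair (cunpair s).1).2.
Definition dirb k k' t1 t2 x y n :=
  [&& haltb (EvS k t1 x n), haltb (EvS k' t2 x n) &
      (resv (EvS k t1 x n) == y.+1) ==> (resv (EvS k' t2 x n) == y.+1)].

Notation ZG := (PFst PVar).
Notation ZA := (PFst (PSnd PVar)).
Notation ZB := (PFst (PSnd (PSnd PVar))).
Notation ZC := (PSnd (PSnd (PSnd PVar))).
Notation ZX := (PFst ZB).
Notation ZY := (PFst (PSnd ZB)).
Notation ZK := (PSnd (PSnd ZB)).
Notation ZK' := (PFst ZC).
Notation ZN := (PSnd ZC).

Definition pEV kk t := piter STEP (PPair (PPair PZero (PPair kk (PPair t ZX))) PZero) ZN.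
Definition pHALT s := pand (pisz (PSnd s)) (peq (PFst (PFst s)) (pconst 1)).
Definition pRES s := PSnd (PFst s).
Definition pDIR t1 t2 := pand (pHALT (pEV ZK t1)) (pand (pHALT (pEV ZK' t2))
   (pite (peq (pRES (pEV ZK t1)) (PSucc ZY)) (pconst 1) (peq (pRES (pEV ZK' t2)) (PSucc ZY)))).
Definition Rp (chi : nat -> nat) :=
  pand (peq (PComp (PExt chi) ZA) (pconst 1))
       (pand (pDIR (PComp TGp ZG) (PComp TGp ZA)) (pDIR (PComp TGp ZA) (PComp TGp ZG))).

Lemma Rp_spec chi g a x y k k' n :
  den (Rp chi) (cpair g (cpair a (cpair (cpair x (cpair y k)) (cpair k' n)))) =
  [&& chi a == 1, dirb k k' (den TGp g) (den TGp a) x y n & dirb k k' (den TGp a) (den TGp g) x y n].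
Proof.
rewrite /Rp /pDIR /pHALT /pRES /pEV. den_simp.
rewrite /dirb /haltb /resv /EvS /S_eval.
set s1 := iter n stepF _. set s2 := iter n stepF _. set s3 := iter n stepF _. set s4 := iter n stepF _.
case: (chi a == 1) => //.
case: ((cunpair s1).2 == 0); case: ((cunpair (cunpair s1).1).1 == 1) => //;
case: ((cunpair s2).2 == 0); case: ((cunpair (cunpair s2).1).1 == 1) => //;
case: ((cunpair (cunpair s1).1).2 == y.+1); case: ((cunpair (cunpair s2).1).2 == y.+1) => //;
case: ((cunpair s3).2 == 0); case: ((cunpair (cunpair s3).1).1 == 1) => //;
case: ((cunpair s4).2 == 0); case: ((cunpair (cunpair s4).1).1 == 1) => //;
case: ((cunpair (cunpair s3).1).2 == y.+1); case: ((cunpair (cunpair s4).1).2 == y.+1) => //.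
Qed.

Ltac pok_all := repeat progress (rewrite ?precOn_unlock ?ppred_unlock ?padd_unlock ?psub_unlock ?pite_unlock ?peq_unlock ?pcons_unlock ?phead_unlock ?ptail_unlock ?piter_unlock ?phist_unlock ?pstrong_unlock ?plook_unlock ?phalfodd_unlock ?phalf_unlock ?podd_unlock ?pnz_unlock ?pisz_unlock ?pand_unlock ?Dof_unlock ?EDp_unlock ?FDp_unlock ?WFp_unlock ?TGp_unlock ?STEP_unlock; try unfold FG, WG, Dp, DG, TGfs1, EVALcase, RETcase, mkEval, mkRet, mkFP1, mkFP2, mkFCO, mkFRE, mkFMU, RA, RN, RV; simpl).

Lemma pok_const n : pok (pconst n). Proof. by elim: n. Qed.

Lemma pok_TGp : pok TGp.
Proof. pok_all; intuition. Qed.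
Lemma pok_STEP : pok STEP.
Proof. pok_all; intuition. Qed.

Ltac pok_small := repeat progress (rewrite ?precOn_unlock ?ppred_unlock ?padd_unlock ?psub_unlock ?pite_unlock ?peq_unlock ?pcons_unlock ?phead_unlock ?ptail_unlock ?piter_unlock ?phist_unlock ?pstrong_unlock ?plook_unlock ?phalfodd_unlock ?phalf_unlock ?podd_unlock ?pnz_unlock ?pisz_unlock ?pand_unlock; try unfold RA, RN, RV; simpl).

Lemma pok_Rp chi : comp chi -> pok (Rp chi).
Proof.
move=> Hc. rewrite /Rp /pDIR /pHALT /pRES /pEV. pok_small.
have := pok_TGp; have := pok_STEP; have := pok_const 1. intuition.
Qed.

Definition chiL (L : nat -> Prop) n := if excluded_middle_informative (L n) then 1 else 0.

Lemma comp_chiL L : decidable_set L -> comp (chiL L).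
Proof.
move=> [e He]; exists (decode e) => n. rewrite /chiL.
case: excluded_middle_informative => H.
- by have [k Hk] := (He n).1 H; exists k.
- by have [k Hk] := (He n).2 H; exists k.
Qed.

Lemma decode_pickle c : decode (pickle c) = c.
Proof. by rewrite /decode pickleK. Qed.

Lemma dec_of_comp f : comp f -> (forall n, f n <= 1) -> decidable_set (fun n => f n = 1).
Proof.
move=> [c Hc] H1; exists (pickle c) => n; split.
- move=> E. have [k Hk] := Hc n. exists k. by rewrite decode_pickle Hk E.
- move=> E. have [k Hk] := Hc n. exists k. rewrite decode_pickle Hk.
  by have := H1 n; case: (f n) E => [|[|m]].
Qed.

Lemma cpair_split4 z : exists g a x y k k' n,
  z = cpair g (cpair a (cpair (cpair x (cpair y k)) (cpair k' n))).
Proof.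
exists (cunpair z).1, (cunpair (cunpair z).2).1,
  (cunpair (cunpair (cunpair (cunpair z).2).2).1).1,
  (cunpair (cunpair (cunpair (cunpair (cunpair z).2).2).1).2).1,
  (cunpair (cunpair (cunpair (cunpair (cunpair z).2).2).1).2).2,
  (cunpair (cunpair (cunpair (cunpair z).2).2).2).1,
  (cunpair (cunpair (cunpair (cunpair z).2).2).2).2.
by rewrite !cpair_cunpair.
Qed.

Lemma haltb_ret s : haltb s -> s = S_ret (resv s) 0.
Proof.
move=> /andP [/eqP H2 /eqP H1]. rewrite /S_ret /resv.
by rewrite -{1}(cpair_cunpair s) H2 -{1}(cpair_cunpair (cunpair s).1) H1.
Qed.

Lemma haltb_S_ret r : haltb (S_ret r 0).
Proof. by rewrite /haltb /S_ret; cps. Qed.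
Lemma resv_S_ret r : resv (S_ret r 0) = r.
Proof. by rewrite /resv /S_ret; cps. Qed.

Lemma EvS_res k c x n : haltb (EvS k (ctenc c) x n) -> resv (EvS k (ctenc c) x n) = oenc (eval k c x).
Proof. move/haltb_ret => H. apply: (sim_det (n := n)). exact: H. Qed.

Lemma EvS_eventually k c x : exists n0, forall n, n0 <= n ->
  EvS k (ctenc c) x n = S_ret (oenc (eval k c x)) 0.
Proof.
have [n0 H0] := sim k c x 0. exists n0 => n Hn.
by rewrite /EvS -(subnK Hn) iterD H0 halt_stay.
Qed.

Lemma TG_ctenc g : den TGp g = ctenc (decode g).
Proof. by rewrite TGp_spec. Qed.

Lemma oenc_eq o y : (oenc o == y.+1) = (o == Some y).
Proof. by case: o. Qed.

Lemma Rp_le1 chi z : den (Rp chi) z <= 1.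
Proof.
have [g [a [x [y [k [k' [n ->]]]]]]] := cpair_split4 z. rewrite Rp_spec. by case: (_ && _).
Qed.

Lemma nat_b1 (b : bool) : nat_of_bool b = 1 -> b. Proof. by case: b. Qed.

Lemma dirb_sound k k' c1 c2 x y n : dirb k k' (ctenc c1) (ctenc c2) x y n ->
  eval k c1 x = Some y -> eval k' c2 x = Some y.
Proof.
move=> /and3P [H1 H2 H3] E. rewrite (EvS_res H1) (EvS_res H2) !oenc_eq E eqxx /= in H3.
exact/eqP.
Qed.

Lemma dirb_complete k k' c1 c2 x y :
  (eval k c1 x = Some y -> eval k' c2 x = Some y) ->
  exists n0, forall n, n0 <= n -> dirb k k' (ctenc c1) (ctenc c2) x y n.
Proof.
move=> H. have [n1 E1] := EvS_eventually k c1 x. have [n2 E2] := EvS_eventually k' c2 x.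
exists (maxn n1 n2) => n Hn. rewrite /dirb E1 ?E2.
- rewrite !haltb_S_ret !resv_S_ret !oenc_eq /=. apply/implyP => /eqP /H ->. by [].
- exact: leq_trans (leq_maxr _ _) Hn.
- exact: leq_trans (leq_maxl _ _) Hn.
Qed.

Lemma exists_k_dir k g a x y : same_fun g a ->
  exists k2, eval k (decode g) x = Some y -> eval k2 (decode a) x = Some y.
Proof.
move=> Hs. case: (classic (eval k (decode g) x = Some y)) => H; last by exists 0.
have [k2 Hk2] : phi a x y by apply/(Hs x y); exists k.
by exists k2.
Qed.

Theorem mainTheorem8 (psi L : nat -> Prop) :
  functional psi -> captures L psi -> Sigma03 psi.
Proof.
move=> Hf [HdL HLpsi Hcap].
pose chi := chiL L. have Hchi : comp chi := comp_chiL HdL.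
exists (fun z => den (Rp chi) z = 1). split.
  apply: dec_of_comp; [exact: den_comp (pok_Rp Hchi) | exact: Rp_le1].
move=> g. split.
- move=> Hpg. have [a0 La0 Hsf] := Hcap g Hpg. exists a0 => b.
  have [x [y [k ->]]] : exists x y k, b = cpair x (cpair y k).
    exists (cunpair b).1, (cunpair (cunpair b).2).1, (cunpair (cunpair b).2).2.
    by rewrite !cpair_cunpair.
  have [k2 Hk2] := exists_k_dir k x y (fun x y => iff_sym (Hsf x y)).
  have [k3 Hk3] := exists_k_dir k x y Hsf.
  pose k' := maxn k2 k3.
  have [n1 D1] := @dirb_complete k k' (decode g) (decode a0) x y
    (fun E => eval_monoL (leq_maxl k2 k3) (Hk2 E)).
  have [n2 D2] := @dirb_complete k k' (decode a0) (decode g) x y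
    (fun E => eval_monoL (leq_maxr k2 k3) (Hk3 E)).
  exists (cpair k' (maxn n1 n2)). rewrite Rp_spec !TG_ctenc.
  rewrite D1 ?leq_maxl // D2 ?leq_maxr // andbT.
  by rewrite /chi /chiL; case: excluded_middle_informative.
- move=> [a Ha].
  have Hdec : forall b, exists k' n, den (Rp chi) (cpair g (cpair a (cpair b (cpair k' n)))) = 1.
    move=> b. have [c Hc] := Ha b. exists (cunpair c).1, (cunpair c).2. by rewrite cpair_cunpair.
  have [k' [n Hc]] := Hdec (cpair 0 (cpair 0 0)).
  move: Hc; rewrite Rp_spec => /nat_b1 /and3P [Hch _ _].
  have La : L a.
    move: Hch; rewrite /chi /chiL; by case: excluded_middle_informative.
  have Hs : same_fun g a.
    move=> x y; split.
    + move=> [k Hk]. have [k'' [n' Hc]] := Hdec (cpair x (cpair y k)).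
      move: Hc; rewrite Rp_spec !TG_ctenc => /nat_b1 /and3P [_ D _].
      exists k''. exact: dirb_sound D Hk.
    + move=> [k Hk]. have [k'' [n' Hc]] := Hdec (cpair x (cpair y k)).
      move: Hc; rewrite Rp_spec !TG_ctenc => /nat_b1 /and3P [_ _ D].
      exists k''. exact: dirb_sound D Hk.
  exact: (Hf g a Hs).2 (HLpsi a La).
Qed.
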